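(* For every NBA $\mathcal A$, the relation $S(\sqsupseteq^{\mathrm{fx\text{-}de}},\sqsubseteq^{\mathrm{fx\text{-}de}})$ is good for saturation, i.e. $\mathcal L(\mathrm{Sat}(\mathcal A,S(\sqsupseteq^{\mathrm{fx\text{-}de}},\sqsubseteq^{\mathrm{fx\text{-}de}})))=\mathcal L(\mathcal A)$.
   Context: An NBA $\mathcal A=(\Sigma,Q,I,F,\delta)$, $\delta\subseteq Q\times\Sigma\times Q$, forward and backward complete; initial traces start in $I$, fair traces are infinite and visit $F$ infinitely often; the language is the set of infinite words with an initial fair trace. Delayed fixed-word simulation: for $w=\sigma_0\sigma_1\cdots\in\Sigma^\omega$, in the game $G_w$ from $(p_0,q_0)$, at round $i$ from $(p_i,q_i)$ Spoiler picks a transition $p_i\xrightarrow{\sigma_i}p_{i+1}$ and Duplicator answers $q_i\xrightarrow{\sigma_i}q_{i+1}$ (Spoiler is forced to read $w$, and Duplicator's strategy may depend on $w$); Duplicator wins the play if for every $i$ with $p_i\in F$ there is $j\ge i$ with $q_j\in F$. Then $p\sqsubseteq^{\mathrm{fx\text{-}de}}q$ iff for every $w\in\Sigma^\omega$ Duplicator has a winning strategy in $G_w$ from $(p,q)$; $\sqsupseteq$ is the inverse. Let $\Delta=Q\times\Sigma\times Q$. For $R_b,R_f\subseteq Q\times Q$, $S(R_b,R_f)=\{((p,\sigma,r),(p',\sigma,r'))\in\Delta\times\Delta:p\,R_b\,p',\ r\,R_f\,r'\}$. For a reflexive $S\subseteq\Delta\times\Delta$, the saturated automaton $\mathrm{Sat}(\mathcal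 A,S)=(\Sigma,Q,I,F,\delta')$ with $\delta'=\{t'\in\Delta:\exists t\in\delta,\ (t',t)\in S\}$. $S$ is good for saturation if $\mathrm{Sat}(\mathcal A,S)$ has the same language as $\mathcal A$. *)

(* Defs.v *)
From mathcomp Require Import all_boot.
Set Implicit Arguments. Unset Strict Implicit. Unset Printing Implicit Defensive.

Record NBA (Sigma Q : finType) := MkNBA {
  init  : Q -> Prop;
  final : Q -> Prop;
  trans : Q -> Sigma -> Q -> Prop
}.

Section Defs.
Variables (Sigma Q : finType).
Implicit Types (A : NBA Sigma Q) (w : nat -> Sigma).

Definition forward_complete A : Prop :=
  forall (q : Q) (a : Sigma), exists q', trans A q a q'.
Definition backward_complete A : Prop :=
  forall (q : Q) (a : Sigma), exists q', trans A q' a q.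

Definition accepting_run A w (r : nat -> Q) : Prop :=
  init A (r 0) /\ (forall i, trans A (r i) (w i) (r i.+1)) /\
  (forall n, exists m, n <= m /\ final A (r m)).

Definition accepts A w : Prop := exists r, accepting_run A w r.

Definition spoiler_play A w (p : Q) (ps : nat -> Q) : Prop :=
  ps 0 = p /\ forall i, trans A (ps i) (w i) (ps i.+1).

(* A Duplicator strategy maps the history of Spoiler's positions
   [:: p_0; ...; p_(i+1)] to Duplicator's answer q_(i+1).  (Duplicator's own
   previous moves are determined by the strategy, and the dependence on w is
   allowed since the strategy is chosen after w.) *)
Definition dup_play (f : seq Q -> Q) (q : Q) (ps : nat -> Q) (i : nat) : Q :=
  match i with 0 => q | i'.+1 => f (mkseq ps i'.+2) end.

Definition dup_wins A w (p q : Q) (f : seq Q -> Q) : Prop :=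
  forall ps, spoiler_play A w p ps ->
    (forall i, trans A (dup_play f q ps i) (w i) (dup_play f q ps i.+1)) /\
    (forall i, final A (ps i) -> exists j, i <= j /\ final A (dup_play f q ps j)).

Definition fxde_sim A (p q : Q) : Prop :=
  forall w, exists f : seq Q -> Q, dup_wins A w p q f.

Definition S_rel (Rb Rf : Q -> Q -> Prop) (t t' : Q * Sigma * Q) : Prop :=
  let '(p, a, r) := t in let '(p', a', r') := t' in
  Rb p p' /\ a = a' /\ Rf r r'.

Definition Sat A (S : Q * Sigma * Q -> Q * Sigma * Q -> Prop) : NBA Sigma Q :=
  MkNBA (init A) (final A)
    (fun p a r => exists t : Q * Sigma * Q,
        (let '(p0, a0, r0) := t in trans A p0 a0 r0) /\ S (p, a, r) t).

Definition good_for_saturation A (S : Q * Sigma * Q -> Q * Sigma * Q -> Prop) : Prop :=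
  forall w, accepts (Sat A S) w <-> accepts A w.

End Defs.

(* Main.v *)
Require Import Defs.
From mathcomp Require Import all_boot.
From Stdlib Require Import ClassicalEpsilon.
Set Implicit Arguments. Unset Strict Implicit. Unset Printing Implicit Defensive.

Lemma eq_in_mkseq' (T : Type) (f g : nat -> T) n :
  (forall j, j < n -> f j = g j) -> mkseq f n = mkseq g n.
Proof.
move=> H; rewrite /mkseq; apply/eq_in_map => j; rewrite mem_iota add0n.
by move=> /andP[_ ?]; apply: H.
Qed.

Lemma dup_play_ext (Q : finType) (f : seq Q -> Q) q ps ps' n :
  (forall j, j <= n -> ps j = ps' j) ->
  forall j, j <= n -> dup_play f q ps j = dup_play f q ps' j.
Proof.
move=> H [|j] Hj //=; congr f; apply: eq_in_mkseq' => i Hi; apply: H.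
by apply: leq_trans Hj.
Qed.

Fixpoint run_from (Sigma Q : Type) (nxt : Q -> Sigma -> Q) (w : nat -> Sigma)
  (s : Q) (start k : nat) : Q :=
  match k with 0 => s | k'.+1 => nxt (run_from nxt w s start k') (w (start + k')) end.

Lemma DW (Sigma Q : finType) (A : NBA Sigma Q) w p q f ps n :
  forward_complete A -> dup_wins A w p q f -> ps 0 = p ->
  (forall j, j < n -> trans A (ps j) (w j) (ps j.+1)) ->
  forall j, j < n -> trans A (dup_play f q ps j) (w j) (dup_play f q ps j.+1).
Proof.
move=> Hfc Hw H0 Hv j Hj.
have Hc : forall x a, {y | trans A x a y}.
  by move=> x a; apply: constructive_indefinite_description; apply: Hfc.
pose nxt x a := proj1_sig (Hc x a).
pose ps' k := if k <= n then ps k else run_from nxt w (ps n) n (k - n).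
have Eps : forall k, k <= n -> ps k = ps' k by move=> k Hk; rewrite /ps' Hk.
have Hsp : spoiler_play A w p ps'.
  split; first by rewrite /ps' leq0n.
  move=> k; case: (ltnP k n) => Hk.
    by rewrite -!Eps //; [apply: Hv | apply: ltnW].
  rewrite /ps'; move: Hk; rewrite leq_eqVlt => /orP[/eqP <-|Hlt].
    rewrite leqnn ltnn subSn // subnn /= addn0.
    exact: (proj2_sig (Hc _ _)).
  rewrite leqNgt Hlt /= leqNgt ltnS (ltnW Hlt) /=.
  rewrite subSn ?(ltnW Hlt) //= subnKC ?(ltnW Hlt) //.
  exact: (proj2_sig (Hc _ _)).
have [Ht _] := Hw ps' Hsp.
rewrite (@dup_play_ext _ f q ps ps' n Eps j (ltnW Hj)) (@dup_play_ext _ f q ps ps' n Eps j.+1 Hj); exact: Ht.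
Qed.


Fixpoint SS (Q : finType) (pp rr s : nat -> Q) (fQ fR : nat -> seq Q -> Q)
  (k : nat) : nat -> nat -> Q * Q :=
  match k with
  | 0 => fun m _ => (pp m, s m)
  | k'.+1 => fun m j => if j <= k' then SS pp rr s fQ fR k' m j else
      let P' := dup_play (fR m) (rr m) (fun j0 => (SS pp rr s fQ fR k' m.+1 j0).2) k' in
      (P', dup_play (fQ m) (s m)
             (fun j0 => if j0 <= k' then (SS pp rr s fQ fR k' m j0).1 else P') k'.+1)
  end.

Lemma main_constr (Sigma Q : finType) (A : NBA Sigma Q) (w : nat -> Sigma)
  (pp rr s : nat -> Q) (fQ fR : nat -> seq Q -> Q) :
  forward_complete A ->
  (forall m, dup_wins A (fun i => w (m + i)) (pp m) (s m) (fQ m)) ->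
  (forall m, dup_wins A (fun i => w (m.+1 + i)) (s m.+1) (rr m) (fR m)) ->
  (forall m, trans A (pp m) (w m) (rr m)) ->
  init A (s 0) -> (forall n, exists m, n <= m /\ final A (s m)) ->
  accepts A w.
Proof.
move=> Hfc HQ HR Ht Hi Hf.
pose S := SS pp rr s fQ fR.
pose P m j := (S j m j).1.
pose Qs m j := (S j m j).2.
have Sst : forall k m j, j <= k -> S k m j = S j m j.
  elim=> [|k IH] m j Hj; first by move: Hj; rewrite leqn0 => /eqP ->.
  move: Hj; rewrite leq_eqVlt => /orP[/eqP -> //|Hj].
  by rewrite ltnS in Hj; rewrite /S /= Hj -/S IH.
have P0 : forall m, P m 0 = pp m by [].
have PS : forall m k, P m k.+1 = dup_play (fR m) (rr m) (Qs m.+1) k.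
  move=> m k; rewrite /P /S /= ltnn /=.
  apply: (@dup_play_ext _ _ _ _ _ k) => // j0 Hj0.
  by rewrite /Qs -/S (Sst _ _ _ Hj0).
have QE : forall m k, Qs m k = dup_play (fQ m) (s m) (P m) k.
  move=> m [|k] //; rewrite /Qs /S /= ltnn /=.
  congr (fQ m); apply: eq_in_mkseq' => j0; rewrite ltnS => Hj0.
  move: Hj0; rewrite leq_eqVlt => /orP[/eqP ->|Hj0].
    by rewrite ltnn /P /S /= ltnn.
  by rewrite ltnS in Hj0; rewrite Hj0 /P -/S (Sst _ _ _ Hj0).
have Hval : forall n m,
    (forall j, j < n -> trans A (P m j) (w (m + j)) (P m j.+1)) /\
    (forall j, j < n -> trans A (Qs m j) (w (m + j)) (Qs m j.+1)).
  elim=> [|n IH] m; first by split.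
  have HP : forall j, j < n.+1 -> trans A (P m j) (w (m + j)) (P m j.+1).
    move=> j; rewrite ltnS leq_eqVlt => /orP[/eqP ->|Hj]; last by apply: (proj1 (IH m)).
    case: n IH => [|k] IH.
      by rewrite P0 PS /= addn0; apply: Ht.
    rewrite !PS -addSnnS.
    apply: (DW (ps:=Qs m.+1) (n:=k.+1) Hfc (HR m)) => //.
    exact: (proj2 (IH m.+1)).
  split=> // j Hj; rewrite !QE.
  exact: (DW (ps:=P m) (n:=n.+1) Hfc (HQ m) (P0 m) HP Hj).
have HvP : forall m, spoiler_play A (fun i => w (m + i)) (pp m) (P m).
  by move=> m; split=> // j; apply: (proj1 (Hval j.+1 m)).
have HvQ : forall m, spoiler_play A (fun i => w (m + i)) (s m) (Qs m).
  by move=> m; split=> // j; apply: (proj2 (Hval j.+1 m)).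
have Hob : forall d m, final A (s (m + d)) -> exists j, d <= j /\ final A (Qs m j).
  elim=> [|d IH] m.
    by rewrite addn0 => H; exists 0.
  rewrite -addSnnS => /IH [j [Hdj Hj]].
  have Hsp : spoiler_play A (fun i => w (m.+1 + i)) (s m.+1) (Qs m.+1).
    by case: (HvQ m.+1).
  have [_ HF] := HR m _ Hsp.
  have [j' [Hjj' Hj']] := HF j Hj.
  rewrite -PS in Hj'.
  have [_ HF'] := HQ m _ (HvP m).
  have [j'' [Hj'' Hfin]] := HF' _ Hj'.
  exists j''; split; last by rewrite QE.
  by apply: leq_trans Hj''; rewrite ltnS; apply: leq_trans Hjj'.
exists (Qs 0); split; first by [].
split.
  by move=> i; have [_ H] := HvQ 0; move: (H i).
move=> n; have [m [Hnm Hm]] := Hf n.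
have [j [Hmj Hj]] := Hob m 0 Hm.
by exists j; split=> //; apply: leq_trans Hmj.
Qed.

Lemma fxde_refl (Sigma Q : finType) (A : NBA Sigma Q) p : fxde_sim A p p.
Proof.
move=> w; exists (last p).
have E : forall ps, ps 0 = p -> forall i, dup_play (last p) p ps i = ps i.
  by move=> ps H0 [|i] //; rewrite /dup_play mkseqS last_rcons.
move=> ps [H0 Hs]; split=> i; first by rewrite !E.
by move=> Hf; exists i; rewrite E.
Qed.

Theorem theorem10p3 (Sigma Q : finType) (A : NBA Sigma Q) :
  forward_complete A -> backward_complete A ->
  good_for_saturation A
    (S_rel (fun p p' => fxde_sim A p' p) (fun r r' => fxde_sim A r r')).
Proof.
move=> Hfc _ w; split; last first.
  move=> [r [Hi [Ht Hf]]]; exists r; split=> //; split=> // i.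
  exists (r i, w i, r i.+1); split; first exact: Ht.
  by split; [apply: fxde_refl | split; [|apply: fxde_refl]].
move=> [s [Hi [Ht Hf]]].
have H1 : forall i, exists pr : Q * Q, trans A pr.1 (w i) pr.2 /\
    fxde_sim A pr.1 (s i) /\ fxde_sim A (s i.+1) pr.2.
  move=> i; have [[[p0 a0] r0] [Htr [Hb [Ha Hr]]]] := Ht i.
  by subst a0; exists (p0, r0).
pose pick i := proj1_sig (constructive_indefinite_description _ (H1 i)).
have Hpick : forall i, trans A (pick i).1 (w i) (pick i).2 /\
    fxde_sim A (pick i).1 (s i) /\ fxde_sim A (s i.+1) (pick i).2.
  by move=> i; exact: (proj2_sig (constructive_indefinite_description _ (H1 i))).
pose pp i := (pick i).1.
pose rr i := (pick i).2.
have HQ0 : forall m, exists f, dup_wins A (fun i => w (m + i)) (pp m) (s m) f.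
  by move=> m; apply: (proj1 (proj2 (Hpick m))).
have HR0 : forall m, exists f, dup_wins A (fun i => w (m.+1 + i)) (s m.+1) (rr m) f.
  by move=> m; apply: (proj2 (proj2 (Hpick m))).
pose fQ m := proj1_sig (constructive_indefinite_description _ (HQ0 m)).
pose fR m := proj1_sig (constructive_indefinite_description _ (HR0 m)).
apply: (@main_constr _ _ A w pp rr s fQ fR Hfc) => //.
- by move=> m; exact: (proj2_sig (constructive_indefinite_description _ (HQ0 m))).
- by move=> m; exact: (proj2_sig (constructive_indefinite_description _ (HR0 m))).
- by move=> m; apply: (proj1 (Hpick m)).
Qed.
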